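(* Let $G$ be a finite group, let $n\ge 1$ and let $m$ be odd. If $G$ is $R_{2^n m}$, then $G$ has at most $m(2^n-1)$ conjugacy classes containing involutions.
   Context: For a finite group $G$, $\overline{G}=G\cup\{\infty\}$, and $K_V$ denotes the complete graph on vertex set $V$. $G$ acts on $\overline{G}$ by right multiplication, with $\infty g=\infty$ for all $g\in G$; for a subgraph $F$ of $K_{\overline{G}}$ and $g\in G$, $Fg$ is the graph obtained by replacing every vertex $v$ by $vg$. A $k$-factor of $K_V$ is a spanning $k$-regular subgraph, and a $k$-factorization is a set of $k$-factors whose edge sets partition the edge set of $K_V$. A $k$-factorization $\mathcal{F}$ of $K_{\overline{G}}$ is $1$-rotational if $Fg\in\mathcal{F}$ for all $F\in\mathcal{F}$ and $g\in G$. A finite group $G$ is called $R_k$ if there exists a $1$-rotational $k$-factorization of $K_{\overline{G}}$. An involution is an element of order $2$. *)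

(* Defs.v *)
From mathcomp Require Import all_boot all_fingroup.
Set Implicit Arguments. Unset Strict Implicit. Unset Printing Implicit Defensive.


(* Vertex set  Gbar = G ∪ {∞}  is  option gT  (None = ∞).
   The finite group G is the whole finGroupType gT. *)

Definition vact (gT : finGroupType) (v : option gT) (g : gT) : option gT :=
  omap (fun x => (x * g)%g) v.

(* A subgraph of K_Gbar is given by its edge set; an edge is a 2-subset. *)
Definition is_edge (gT : finGroupType) (e : {set option gT}) : bool := #|e| == 2%N.

Definition graph_act (gT : finGroupType) (F : {set {set option gT}}) (g : gT)
  : {set {set option gT}} :=
  [set [set vact v g | v in e] | e : {set option gT} in F].

Definition is_kfactor (gT : finGroupType) (k : nat) (F : {set {set option gT}}) : Prop :=
  (forall e, e \in F -> is_edge e) /\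
  (forall v : option gT, #|[set e in F | v \in e]| = k).

Definition is_kfactorization (gT : finGroupType) (k : nat)
  (FF : {set {set {set option gT}}}) : Prop :=
  (forall F, F \in FF -> is_kfactor k F) /\
  (forall e : {set option gT}, is_edge e -> #|[set F in FF | e \in F]| = 1%N).

Definition one_rotational (gT : finGroupType) (FF : {set {set {set option gT}}}) : Prop :=
  forall F g, F \in FF -> graph_act F g \in FF.

Definition is_Rk (gT : finGroupType) (k : nat) : Prop :=
  exists FF : {set {set {set option gT}}},
    is_kfactorization k FF /\ one_rotational FF.

Definition involution_classes (gT : finGroupType) : {set {set gT}} :=
  [set C in classes [set: gT] | [exists x in C, #[x]%g == 2%N]].

(* Main.v *)
Require Import Defs.
From mathcomp Require Import all_boot all_fingroup.
From mathcomp Require Import pgroup sylow.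

Section Helpers.
Variable gT : finGroupType.
Implicit Types (F : {set {set option gT}}) (g h : gT).

Lemma vact1 (v : option gT) : vact v 1 = v.
Proof. by case: v => [x|] //=; rewrite /vact /= mulg1. Qed.

Lemma vactM (v : option gT) g h : vact (vact v g) h = vact v (g * h).
Proof. by case: v => [x|] //=; rewrite /vact /= mulgA. Qed.

Lemma graph_act1 F : graph_act F 1 = F.
Proof.
rewrite /graph_act -[RHS]imset_id; apply: eq_imset => e.
by rewrite -[RHS]imset_id; apply: eq_imset => v; rewrite vact1.
Qed.

Lemma graph_actM F g h : graph_act (graph_act F g) h = graph_act F (g * h).
Proof.
rewrite /graph_act -imset_comp; apply: eq_imset => e /=.
by rewrite -imset_comp; apply: eq_imset => v /=; rewrite vactM.
Qed.

Lemma graph_act_mem F g e : e \in F -> [set vact v g | v in e] \in graph_act F g.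
Proof. by move=> eF; apply: imset_f. Qed.

Lemma dvd_card_rclosed (H : {group gT}) (A : {set gT}) :
  (A * H \subset A)%g -> #|H| %| #|A|.
Proof.
move=> sAH.
set B := (A^-1)%g.
have eHB : (H * B)%g = B.
  apply/eqP; rewrite eqEsubset mulG_subr andbT.
  apply/subsetP=> _ /mulsgP[h b Hh Bb ->].
  rewrite /B mem_invg invMg; apply: (subsetP sAH); apply: mem_mulg => //.
    by rewrite -mem_invg.
  by rewrite groupV.
have partB : partition (rcosets H B) (H * B)%g.
  set HB := (H * B)%g; have sGHG: {subset B <= HB} by apply/subsetP/mulG_subr.
  have defHx x: x \in HB -> [set y in HB | rcoset H x == rcoset H y] = (H :* x)%g.
    move=> HGx; apply/setP=> y; rewrite inE !rcosetE (sameP eqP rcoset_eqP).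
    by rewrite rcoset_sym; apply/andb_idl/subsetP; rewrite mulGS sub1set.
  have:= preim_partitionP (rcoset H) HB; congr (partition _ _); apply/setP=> Hx.
  apply/imsetP/idP=> [[x HGx ->] | ]; first by rewrite defHx // mem_rcosets.
  by case/rcosetsP=> x /sGHG-HGx ->; exists x; rewrite ?defHx.
have -> : #|A| = #|B| by rewrite /B card_invg.
rewrite -eHB (@card_uniform_partition _ #|H| _ _ _ partB).
  by apply: dvdn_mull.
by move=> _ /rcosetsP[x _ ->]; rewrite card_rcoset.
Qed.

Lemma edge_none (e : {set option gT}) :
  is_edge e -> None \in e -> exists x, e = [set None; Some x].
Proof.
case/cards2P=> a [b [ab ->]]; rewrite !inE => /orP[/eqP Ea|/eqP Eb].
  subst a; case: b ab => [x|] // _; by exists x.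
subst b; case: a ab => [x|] // _; exists x; by rewrite setUC.
Qed.

Lemma deg_set F : (forall e, e \in F -> is_edge e) ->
  [set e in F | None \in e] =
  [set [set None; Some x] | x in [set x | [set None; Some x] \in F]].
Proof.
move=> FE; apply/setP=> e; apply/idP/imsetP.
  rewrite inE => /andP[eF Ne].
  have [x Ex] := @edge_none e (FE e eF) Ne.
  by exists x => //; rewrite inE -Ex.
by case=> x; rewrite inE => xF ->; rewrite inE xF !inE eqxx.
Qed.

Lemma set_none_inj : injective (fun x : gT => [set None; Some x]).
Proof.
move=> x y /setP /(_ (Some x)); rewrite !inE eqxx /=.
by move/esym/eqP=> [].
Qed.

Lemma card_N F k : is_kfactor k F ->
  #|[set x | [set None; Some x] \in F]| = k.
Proof.
case=> FE /(_ None); rewrite deg_set // card_imset //.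
exact: set_none_inj.
Qed.

End Helpers.
Arguments graph_act_mem {gT F} g {e}.
Arguments card_N {gT F k}.
Arguments dvd_card_rclosed {gT H A}.
Arguments graph_act1 {gT}.
Arguments graph_actM {gT}.

Theorem theorem2p5 (gT : finGroupType) (n m : nat) :
  1 <= n -> odd m -> is_Rk gT (2 ^ n * m) ->
  #|involution_classes gT| <= m * (2 ^ n - 1).
Proof.
move=> n1 om [FF [[facP partP] rot]].
set k := 2 ^ n * m.
have m_pos : 0 < m by case: m om {k facP partP}.
have existsF : forall e, is_edge e -> exists2 F, F \in FF & e \in F.
  move=> e Ee; have /cards1P[F0 E0] : #|[set F in FF | e \in F]| == 1.
    by rewrite partP.
  have : F0 \in [set F in FF | e \in F] by rewrite E0 set11.
  by rewrite inE => /andP[]; exists F0.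
have uniqF : forall e F1 F2, is_edge e -> F1 \in FF -> F2 \in FF ->
    e \in F1 -> e \in F2 -> F1 = F2.
  move=> e F1 F2 Ee F1F F2F eF1 eF2.
  have /cards1P[F0 E0] : #|[set F in FF | e \in F]| == 1 by rewrite partP.
  have : F1 \in [set F in FF | e \in F] by rewrite inE F1F eF1.
  have : F2 \in [set F in FF | e \in F] by rewrite inE F2F eF2.
  by rewrite E0 !inE => /eqP-> /eqP->.
have e1E : is_edge [set None; Some (1%g:gT)] by rewrite /is_edge cards2.
have [F0 F0F e1F0] := existsF _ e1E.
have trans : forall F, F \in FF -> exists y, F = graph_act F0 y.
  move=> F FF_F.
  have : 0 < #|[set x | [set None; Some x] \in F]|.
    by rewrite (card_N (facP F FF_F)) /k muln_gt0 expn_gt0 m_pos.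
  case/card_gt0P => y; rewrite inE => yF; exists y.
  apply: (uniqF [set None; Some y]) => //; first by rewrite /is_edge cards2.
    by apply: rot.
  by have := graph_act_mem y e1F0; rewrite imsetU1 imset_set1 /vact /= mul1g.
set H0 := [set g : gT | graph_act F0 g == F0].
have gH0 : group_set H0.
  apply/group_setP; split; first by rewrite inE graph_act1.
  by move=> x y; rewrite !inE => /eqP Hx /eqP Hy; rewrite -graph_actM Hx Hy.
pose H := Group gH0.
have dH : #|H| %| k.
  rewrite /k -(card_N (facP F0 F0F)); apply: dvd_card_rclosed.
  apply/subsetP=> _ /mulsgP[x h xN hH ->].
  rewrite inE in xN; rewrite inE.
  have hH' : graph_act F0 h = F0 by move: hH; rewrite inE => /eqP.
  rewrite -hH'; have := graph_act_mem h xN.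
  by rewrite imsetU1 imset_set1 /vact /=.
have [P sylP] := Sylow_exists 2 H.
have cP : #|P| <= 2 ^ n.
  have /p_natP[e eP] : 2.-nat #|P| := pHall_pgroup sylP.
  have dP : #|P| %| k := dvdn_trans (cardSg (pHall_sub sylP)) dH.
  rewrite eP in dP *; apply: dvdn_leq; first by rewrite expn_gt0.
  by move: dP; rewrite /k Gauss_dvdl // coprimeXl // coprime2n.
have key : forall t : gT, #[t]%g = 2 ->
    exists2 u, u \in (P :\ 1)%g & (t ^: [set: gT] = u ^: [set: gT])%g.
  move=> t ot.
  have t1 : (t != 1)%g by apply/eqP => t1; move: ot; rewrite t1 order1.
  have tt : (t * t = 1)%g by have := expg_order t; rewrite ot expgS expg1.
  have neq : Some (1%g:gT) != Some t by apply: contra t1 => /eqP [] <-.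
  have eE : is_edge [set Some (1%g:gT); Some t] by rewrite /is_edge cards2 neq.
  have [F FF_F eF] := existsF _ eE.
  have Ft : graph_act F t = F.
    apply: (uniqF _ _ _ eE) => //; first by apply: rot.
    have := graph_act_mem t eF; rewrite imsetU1 imset_set1 /vact /= mul1g tt.
    by rewrite setUC.
  have [y Fy] := trans F FF_F.
  set s := (t ^ y^-1)%g.
  have sH : s \in H.
    rewrite inE /s conjgE invgK -!graph_actM -Fy Ft Fy graph_actM mulgV.
    by rewrite graph_act1.
  have os : #[s]%g = 2 by rewrite orderJ.
  have ps : (2.-group <[s]>)%g by have : 2.-nat #[s]%g by rewrite os pnat_id.
  have sHs : (<[s]> \subset H)%g by rewrite cycle_subG.
  have [x xH sPx] := Sylow_subJ sylP sHs ps.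
  exists (s ^ x^-1)%g.
    rewrite !inE -mem_conjg (subsetP sPx) ?cycle_id // andbT.
    by rewrite !conjg_eq1.
  by rewrite /s !classGidl ?inE.
have sub : involution_classes gT \subset [set (u ^: [set: gT])%g | u in (P :\ 1)%g].
  apply/subsetP=> C; rewrite inE => /andP[/imsetP[z _ ->] /exists_inP[t tC /eqP ot]].
  have [u uP Eu] := key t ot.
  have -> : (z ^: [set: gT] = t ^: [set: gT])%g.
    by case/imsetP: tC => w _ ->; rewrite classGidl ?inE.
  by rewrite Eu; apply/imsetP; exists u.
apply: leq_trans (subset_leq_card sub) _.
apply: leq_trans (leq_imset_card _ _) _.
have -> : #|(P :\ 1)%g| = #|P| - 1 by rewrite (cardsD1 1%g P) group1 add1n subn1.
apply: leq_trans (leq_sub2r 1 cP) _.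
by rewrite leq_pmull.
Qed.
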